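(* Let $U$ be a rise function that is three times continuously differentiable on $[0,1]$. (i) If $U''(\phi)\le0$ and $U'''(\phi)\le 2\,U''(\phi)^2/U'(\phi)$ for all $\phi\in[0,1]$, then $U$ is icpd. (ii) If $U''(\phi)\ge0$ and $U'''(\phi)\ge 2\,U''(\phi)^2/U'(\phi)$ for all $\phi\in[0,1]$, then $U$ is dcpd. More generally, $U$ is icpd if $U'''(\phi)\le 3\frac{U''(\phi)^2}{U'(\phi)}-\frac{U''(\psi)U''(\phi)U'(\phi)}{U'(\psi)^2}$ for all $0\le\psi\le\phi\le1$, and dcpd if the reverse inequality holds for all $0\le\psi\le\phi\le1$.
   Context: A rise function is a smooth $U:[0,\infty)\to[0,\infty)$ with $U'>0$, $U(0)=0$, $U(1)=1$. $H_\varepsilon(\phi)=U^{-1}(U(\phi)+\varepsilon)$ and $\Delta H(\phi,\Delta\phi,\varepsilon)=H_\varepsilon(\phi+\Delta\phi)-H_\varepsilon(\phi)$ on $\mathcal{D}=\{(\phi,\Delta\phi,\varepsilon):0\le\varepsilon\le1,\ 0\le\phi\le1,\ 0\le\Delta\phi\le U^{-1}(1-\varepsilon)-\phi\}$. $U$ is icpd (increasing the change of phase differences) if $\partial_\phi\Delta H\ge0$ on $\mathcal{D}$, and dcpd (decreasing the change of phase differences) if $\partial_\phi\Delta H\le0$ on $\mathcal{D}$. *)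

(* Defs.v *)
From Stdlib Require Import Reals Lra ClassicalEpsilon.
Open Scope R_scope.

Definition nonneg (x : R) : Prop := 0 <= x.
Definition unit_interval (x : R) : Prop := 0 <= x <= 1.

(* Smooth (C^oo) on [0,+oo): a tower of derivatives, each taken within
   [0,+oo) (one-sided at the endpoint 0), via Stdlib's D_in. *)
Definition smooth_nonneg (U : R -> R) : Prop :=
  exists Df : nat -> R -> R,
    (forall x, 0 <= x -> Df O x = U x) /\
    (forall n x, 0 <= x -> D_in (Df n) (Df (S n)) nonneg x).

Definition rise_function (U : R -> R) : Prop :=
  smooth_nonneg U /\
  (forall x, 0 <= x -> 0 <= U x) /\
  (forall (d : R -> R) x, 0 <= x -> D_in U d nonneg x -> 0 < d x) /\
  U 0 = 0 /\ U 1 = 1.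

Definition Uinv (U : R -> R) (y : R) : R :=
  epsilon (inhabits 0) (fun x => 0 <= x /\ U x = y).

Definition Heps (U : R -> R) (eps phi : R) : R := Uinv U (U phi + eps).

Definition DeltaH (U : R -> R) (phi dphi eps : R) : R :=
  Heps U eps (phi + dphi) - Heps U eps phi.

Definition inD (U : R -> R) (phi dphi eps : R) : Prop :=
  0 <= eps <= 1 /\ 0 <= phi <= 1 /\ 0 <= dphi <= Uinv U (1 - eps) - phi.

(* Partial derivative in phi taken within the phi-slice of D. *)
Definition icpd (U : R -> R) : Prop :=
  forall phi dphi eps, inD U phi dphi eps ->
    exists l, D_in (fun p => DeltaH U p dphi eps) (fun _ => l)
                   (fun p => inD U p dphi eps) phi /\ 0 <= l.

Definition dcpd (U : R -> R) : Prop :=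
  forall phi dphi eps, inD U phi dphi eps ->
    exists l, D_in (fun p => DeltaH U p dphi eps) (fun _ => l)
                   (fun p => inD U p dphi eps) phi /\ l <= 0.

Definition C3_on_unit (U U1 U2 U3 : R -> R) : Prop :=
  forall x, 0 <= x <= 1 ->
    D_in U U1 unit_interval x /\ D_in U1 U2 unit_interval x /\
    D_in U2 U3 unit_interval x /\ limit1_in U3 unit_interval (U3 x) x.

(* Main.v *)
Require Import Defs.
From Stdlib Require Import Reals Lra ClassicalEpsilon Ranalysis5.
Open Scope R_scope.

Lemma D_in_d f d e D x : D_in f d D x -> d x = e x -> D_in f e D x.
Proof. unfold D_in; intros H E; rewrite <- E; exact H. Qed.

Lemma D_in_f f g d D x : (forall y, D y -> f y = g y) -> f x = g x -> D_in f d D x -> D_in g d D x.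
Proof.
  unfold D_in, limit1_in, limit_in; intros E Dx H eps Heps.
  destruct (H eps Heps) as [alp [Ha Hb]]; exists alp; split; auto.
  intros y [[Dy Ny] Hy]. rewrite <- (E y Dy), <- Dx. apply Hb.
  split; [split|]; auto.
Qed.

Lemma D_in_restrict f d D D' x : (forall y, D' y -> D y) -> D_in f d D x -> D_in f d D' x.
Proof.
  unfold D_in, limit1_in, limit_in; intros E H eps Heps.
  destruct (H eps Heps) as [alp [Ha Hb]]; exists alp; split; auto.
  intros y [[Dy Ny] Hy]. apply Hb; split; [split|]; auto.
Qed.

Lemma D_in_of_lim f l D x : derivable_pt_lim f x l -> D_in f (fun _ => l) D x.
Proof.
  unfold D_in, limit1_in, limit_in, derivable_pt_lim; intros H eps Heps.
  destruct (H eps Heps) as [del Hd]; exists del; split; [apply cond_pos|].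
  intros y [[Dy Ny] Hy]. simpl in *. unfold Rdist in *.
  assert (E : y = x + (y - x)) by ring.
  rewrite E at 1. apply Hd; [lra|]. exact Hy.
Qed.

Lemma D_in_inv D x : x <> 0 -> D_in (fun z => / z) (fun z => - / (z * z)) D x.
Proof.
  intro Hx.
  assert (H := derivable_pt_lim_div (fct_cte 1) id x 0 1 (derivable_pt_lim_const 1 x) (derivable_pt_lim_id x) Hx).
  apply (D_in_of_lim _ _ D) in H.
  apply (D_in_f (div_fct (fct_cte 1) id)).
  - intros; unfold div_fct, fct_cte, id; unfold Rdiv; ring.
  - unfold div_fct, fct_cte, id; unfold Rdiv; ring.
  - eapply D_in_d; [exact H|]. unfold fct_cte, id, Rsqr. simpl. field; auto.
Qed.

Lemma D_in_Rinv f d D x : D_in f d D x -> f x <> 0 ->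
  D_in (fun z => / f z) (fun z => d z * - / (f z * f z)) D x.
Proof.
  intros H Hx.
  assert (H2 := Dcomp D (fun _ => True) d (fun z => - / (z * z)) f (fun z => / z) x H (D_in_inv _ _ Hx)).
  eapply D_in_restrict; [|exact H2]. intros y Hy; split; auto.
Qed.

Definition clamp a b x := Rmax a (Rmin x b).

Lemma clamp_in a b x : a <= b -> a <= clamp a b x <= b.
Proof. unfold clamp, Rmax, Rmin; intros; repeat destruct Rle_dec; lra. Qed.

Lemma clamp_id a b x : a <= x <= b -> clamp a b x = x.
Proof. unfold clamp, Rmax, Rmin; intros; repeat destruct Rle_dec; lra. Qed.

Lemma clamp_lip a b x c : a <= c <= b -> Rabs (clamp a b x - c) <= Rabs (x - c).
Proof. unfold clamp, Rmax, Rmin; intros; repeat destruct Rle_dec; unfold Rabs; repeat destruct Rcase_abs; lra. Qed.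

Lemma clamp_cont f a b c : a <= b -> a <= c <= b ->
  continue_in f (fun z => a <= z <= b) c -> continuity_pt (fun x => f (clamp a b x)) c.
Proof.
  intros Hab Hc H. unfold continuity_pt, continue_in, limit1_in, limit_in in *.
  intros eps Heps. destruct (H eps Heps) as [alp [Ha Hb]]. exists alp; split; auto.
  intros x [_ Hx]. simpl in *. unfold Rdist in *. rewrite (clamp_id a b c Hc).
  destruct (Req_dec (clamp a b x) c) as [E|E].
  - rewrite E. unfold Rminus; rewrite Rplus_opp_r, Rabs_R0; auto.
  - apply Hb. split; [split|].
    + apply clamp_in; auto.
    + auto.
    + pose proof (clamp_lip a b x c Hc); lra.
Qed.

Lemma clamp_der f d a b c : a < c < b ->
  D_in f d (fun z => a <= z <= b) c -> derivable_pt_lim (fun x => f (clamp a b x)) c (d c).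
Proof.
  intros Hc H. unfold D_in, limit1_in, limit_in, derivable_pt_lim in *.
  intros eps Heps. destruct (H eps Heps) as [alp [Ha Hb]].
  assert (Hp : 0 < Rmin alp (Rmin (c - a) (b - c))).
  { unfold Rmin; repeat destruct Rle_dec; lra. }
  exists (mkposreal _ Hp). intros h Hh Hh2. simpl in *.
  assert (Hm : Rmin alp (Rmin (c - a) (b - c)) <= alp /\ Rmin alp (Rmin (c - a) (b - c)) <= c - a
     /\ Rmin alp (Rmin (c - a) (b - c)) <= b - c).
  { unfold Rmin; repeat destruct Rle_dec; lra. }
  assert (Ha2 : Rabs h < c - a) by lra. assert (Hb2 : Rabs h < b - c) by lra.
  apply Rabs_def2 in Ha2. apply Rabs_def2 in Hb2.
  rewrite (clamp_id a b (c + h)) by lra. rewrite (clamp_id a b c) by lra.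
  unfold Rdist in Hb.
  replace h with ((c + h) - c) at 2 by ring.
  apply Hb. split; [split|]; [lra| |].
  - intro E; apply Hh; lra.
  - replace (c + h - c) with h by ring; lra.
Qed.

Lemma mvt_in f d a b : a < b ->
  (forall t, a <= t <= b -> D_in f d (fun z => a <= z <= b) t) ->
  exists c, a < c < b /\ f b - f a = d c * (b - a).
Proof.
  intros Hab H.
  set (fe := fun x => f (clamp a b x)).
  assert (pr1 : forall c, a < c < b -> derivable_pt fe c).
  { intros c Hc. exists (d c). apply clamp_der; auto. apply H; lra. }
  assert (pr2 : forall c, a < c < b -> derivable_pt id c).
  { intros; apply derivable_pt_id. }
  destruct (MVT fe id a b pr1 pr2 Hab) as [c [P Hc]].
  - intros c Hc. apply clamp_cont; [lra|auto|]. eapply cont_deriv; apply H; auto.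
  - intros c Hc. apply derivable_continuous_pt, derivable_pt_id.
  - exists c; split; auto.
    assert (E1 : derive_pt fe c (pr1 c P) = d c).
    { apply derive_pt_eq_0. apply clamp_der; auto. apply H; lra. }
    assert (E2 : derive_pt id c (pr2 c P) = 1).
    { apply derive_pt_eq_0. apply derivable_pt_lim_id. }
    rewrite E1, E2 in Hc. unfold fe, id in Hc.
    rewrite (clamp_id a b a), (clamp_id a b b) in Hc by lra. lra.
Qed.

Lemma mono_in f d a b : a <= b ->
  (forall t, a <= t <= b -> D_in f d (fun z => a <= z <= b) t) ->
  (forall t, a <= t <= b -> 0 <= d t) -> f a <= f b.
Proof.
  intros Hab H Hd. destruct (Req_dec a b) as [E|E]; [subst; lra|].
  destruct (mvt_in f d a b) as [c [Hc Ec]]; auto; [lra|].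
  assert (0 <= d c * (b - a)) by (apply Rmult_le_pos; [apply Hd; lra|lra]). lra.
Qed.

Lemma adh_unit x : 0 <= x <= 1 -> adhDa (D_x unit_interval x) x.
Proof.
  intros Hx alp Ha. unfold D_x, unit_interval.
  destruct (Rle_dec x (1/2)).
  - exists (x + Rmin (alp/2) (1/2)). unfold Rdist, Rmin; destruct Rle_dec;
    [rewrite Rabs_right|rewrite Rabs_right]; repeat split; lra.
  - exists (x - Rmin (alp/2) (1/2)). unfold Rdist, Rmin; destruct Rle_dec;
    [rewrite Rabs_left|rewrite Rabs_left]; repeat split; lra.
Qed.

Lemma rise_Df U : rise_function U -> exists Df1 : R -> R,
  forall x, 0 <= x -> D_in U Df1 Defs.nonneg x /\ 0 < Df1 x.
Proof.
  intros [[Df [H0 HD]] [_ [Hd _]]]. exists (Df 1%nat). intros x Hx.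
  assert (D_in U (Df 1%nat) Defs.nonneg x).
  { apply (D_in_f (Df 0%nat)); auto. }
  split; auto.
Qed.

Lemma Ustrict U : rise_function U -> forall a b, 0 <= a -> a < b -> U a < U b.
Proof.
  intros HU a b Ha Hab. destruct (rise_Df U HU) as [d Hd].
  destruct (mvt_in U d a b Hab) as [c [Hc E]].
  - intros t Ht. eapply D_in_restrict; [|apply Hd; lra]. unfold Defs.nonneg; intros; lra.
  - assert (0 < d c) by (apply Hd; lra). assert (0 < d c * (b - a)) by (apply Rmult_lt_0_compat; lra). lra.
Qed.

Lemma Ule U : rise_function U -> forall a b, 0 <= a -> a <= b -> U a <= U b.
Proof.
  intros HU a b Ha Hab. destruct (Req_dec a b); [subst; lra|].
  left; apply Ustrict; auto; lra.
Qed.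

Lemma Ule_inv U : rise_function U -> forall a b, 0 <= a -> 0 <= b -> U a <= U b -> a <= b.
Proof.
  intros HU a b Ha Hb H. destruct (Rle_dec a b); auto.
  assert (U b < U a) by (apply Ustrict; auto; lra). lra.
Qed.

Lemma U1pos U U1 U2 U3 : rise_function U -> C3_on_unit U U1 U2 U3 ->
  forall x, 0 <= x <= 1 -> 0 < U1 x.
Proof.
  intros HU HC x Hx. destruct (rise_Df U HU) as [d Hd].
  destruct (Hd x (proj1 Hx)) as [H1 H2].
  assert (H3 : D_in U d unit_interval x).
  { eapply D_in_restrict; [|exact H1]. unfold Defs.nonneg, unit_interval; intros; lra. }
  destruct (HC x Hx) as [H4 _].
  unfold D_in in *.
  rewrite <- (single_limit _ _ _ _ _ (adh_unit x Hx) H3 H4); auto.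
Qed.

Lemma Uonto U U1 U2 U3 : rise_function U -> C3_on_unit U U1 U2 U3 ->
  forall y, 0 <= y <= 1 -> exists x, 0 <= x <= 1 /\ U x = y.
Proof.
  intros HU HC y Hy. destruct HU as [HS [Hnn [Hd [U0 U1e]]]].
  destruct (Req_dec y 0) as [E|E]; [exists 0; split; [lra|congruence]|].
  destruct (Req_dec y 1) as [E'|E']; [exists 1; split; [lra|congruence]|].
  destruct (IVT_interv (fun x => U (clamp 0 1 x) - y) 0 1) as [z [Hz Ez]].
  - intros a Ha. apply continuity_pt_minus; [|apply continuity_pt_const; intros u v; auto].
    apply clamp_cont; [lra|auto|]. destruct (HC a Ha) as [H _]. eapply cont_deriv; exact H.
  - lra.
  - rewrite clamp_id by lra. lra.
  - rewrite clamp_id by lra. lra.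
  - exists z; split; auto. rewrite clamp_id in Ez by lra. lra.
Qed.

Lemma Uinv_spec U U1 U2 U3 : rise_function U -> C3_on_unit U U1 U2 U3 ->
  forall y, 0 <= y <= 1 -> 0 <= Uinv U y <= 1 /\ U (Uinv U y) = y.
Proof.
  intros HU HC y Hy. destruct (Uonto U U1 U2 U3 HU HC y Hy) as [x [Hx Ex]].
  assert (Hs : 0 <= Uinv U y /\ U (Uinv U y) = y).
  { unfold Uinv. apply epsilon_spec. exists x; split; auto; lra. }
  destruct Hs as [H1 H2]. split; auto.
  assert (Uinv U y <= x).
  { apply (Ule_inv U HU); lra. }
  lra.
Qed.

Lemma Uinv_U U : rise_function U -> forall x, 0 <= x -> Uinv U (U x) = x.
Proof.
  intros HU x Hx.
  assert (Hs : 0 <= Uinv U (U x) /\ U (Uinv U (U x)) = U x).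
  { unfold Uinv. apply epsilon_spec. exists x; split; auto. }
  destruct Hs as [H1 H2].
  assert (Uinv U (U x) <= x) by (apply (Ule_inv U HU); lra).
  assert (x <= Uinv U (U x)) by (apply (Ule_inv U HU); lra).
  lra.
Qed.

Lemma Uinv_cont U U1 U2 U3 : rise_function U -> C3_on_unit U U1 U2 U3 ->
  forall y, 0 <= y <= 1 -> continue_in (Uinv U) unit_interval y.
Proof.
  intros HU HC y Hy. unfold continue_in, limit1_in, limit_in. simpl. unfold Rdist.
  intros e He.
  destruct (Uinv_spec U U1 U2 U3 HU HC y Hy) as [Hx0 Ex0].
  set (x0 := Uinv U y) in *.
  assert (HVmono : forall z, 0 <= z <= 1 -> y <= z -> x0 <= Uinv U z).
  { intros z Hz Hyz. destruct (Uinv_spec U U1 U2 U3 HU HC z Hz) as [Hz1 Ez].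
    apply (Ule_inv U HU); lra. }
  assert (HVmono' : forall z, 0 <= z <= 1 -> z <= y -> Uinv U z <= x0).
  { intros z Hz Hyz. destruct (Uinv_spec U U1 U2 U3 HU HC z Hz) as [Hz1 Ez].
    apply (Ule_inv U HU); lra. }
  assert (Hd1 : U x0 < U (x0 + e/2)) by (apply (Ustrict U HU); lra).
  assert (Hup : forall z, 0 <= z <= 1 -> y <= z -> z < U (x0 + e / 2) -> Uinv U z < x0 + e/2).
  { intros z Hz Hyz Hz2. destruct (Uinv_spec U U1 U2 U3 HU HC z Hz) as [Hz1 Ez].
    destruct (Rlt_le_dec (Uinv U z) (x0 + e/2)) as [|Hc]; auto.
    assert (U (x0 + e/2) <= U (Uinv U z)) by (apply (Ule U HU); lra). lra. }
  destruct (Rle_dec (x0 - e/2) 0) as [Hl|Hl].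
  - exists (U (x0 + e/2) - y). split; [lra|].
    intros z [[Hz Hzy] Hd]. unfold unit_interval in Hz.
    destruct (Rle_dec y z).
    + assert (z < U (x0 + e/2)) by (apply Rabs_def2 in Hd; lra).
      specialize (Hup z Hz r H). specialize (HVmono z Hz r).
      rewrite Rabs_right; lra.
    + specialize (HVmono' z Hz ltac:(lra)).
      destruct (Uinv_spec U U1 U2 U3 HU HC z Hz) as [Hz1 Ez].
      rewrite Rabs_left1; lra.
  - assert (Hd2 : U (x0 - e/2) < U x0) by (apply (Ustrict U HU); lra).
    exists (Rmin (U (x0 + e/2) - y) (y - U (x0 - e/2))). split.
    { unfold Rmin; destruct Rle_dec; lra. }
    intros z [[Hz Hzy] Hd]. unfold unit_interval in Hz.
    assert (Hm : Rmin (U (x0 + e/2) - y) (y - U (x0 - e/2)) <= U (x0 + e/2) - y /\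
                 Rmin (U (x0 + e/2) - y) (y - U (x0 - e/2)) <= y - U (x0 - e/2)).
    { unfold Rmin; destruct Rle_dec; lra. }
    apply Rabs_def2 in Hd.
    destruct (Rle_dec y z).
    + assert (z < U (x0 + e/2)) by lra.
      specialize (Hup z Hz r H). specialize (HVmono z Hz r).
      rewrite Rabs_right; lra.
    + specialize (HVmono' z Hz ltac:(lra)).
      destruct (Uinv_spec U U1 U2 U3 HU HC z Hz) as [Hz1 Ez].
      assert (x0 - e/2 < Uinv U z).
      { destruct (Rlt_le_dec (x0 - e/2) (Uinv U z)) as [|Hc]; auto.
        assert (U (Uinv U z) <= U (x0 - e/2)) by (apply (Ule U HU); lra). lra. }
      rewrite Rabs_left1; lra.
Qed.

Lemma limit_ext f g D D' l x : limit1_in f D l x -> (forall z, D' z -> D z /\ f z = g z) ->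
  limit1_in g D' l x.
Proof.
  unfold limit1_in, limit_in; intros H E eps Heps.
  destruct (H eps Heps) as [alp [Ha Hb]]; exists alp; split; auto.
  intros z [Dz Hz]. destruct (E z Dz) as [D1 E1]. rewrite <- E1. apply Hb; auto.
Qed.

Lemma Uinv_der U U1 U2 U3 : rise_function U -> C3_on_unit U U1 U2 U3 ->
  forall y, 0 <= y <= 1 -> D_in (Uinv U) (fun z => / U1 (Uinv U z)) unit_interval y.
Proof.
  intros HU HC y Hy.
  destruct (Uinv_spec U U1 U2 U3 HU HC y Hy) as [Hx0 Ex0].
  assert (Hc := Uinv_cont U U1 U2 U3 HU HC y Hy).
  destruct (HC _ Hx0) as [HD _].
  assert (H := limit_comp (Uinv U) (fun w => (U w - U (Uinv U y)) / (w - Uinv U y))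
     (D_x unit_interval y) (D_x unit_interval (Uinv U y)) _ _ y Hc HD).
  assert (Hp := U1pos U U1 U2 U3 HU HC _ Hx0).
  apply limit_inv in H; [|lra].
  unfold D_in. eapply limit_ext; [exact H|].
  intros z [Hz Hzy]. unfold unit_interval in Hz.
  destruct (Uinv_spec U U1 U2 U3 HU HC z Hz) as [Hz1 Ez].
  assert (Hne : Uinv U y <> Uinv U z).
  { intro E. apply Hzy. rewrite <- Ex0, <- Ez, E. reflexivity. }
  split.
  - split; [split; auto|]. split; auto.
  - rewrite Ez, Ex0. field. split; intro; apply Hzy; lra.
Qed.

Lemma H_der U U1 U2 U3 : rise_function U -> C3_on_unit U U1 U2 U3 ->
  forall eps p, 0 <= p <= 1 -> 0 <= U p + eps <= 1 ->
  D_in (fun q => Uinv U (U q + eps)) (fun q => U1 q / U1 (Uinv U (U q + eps)))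
    (fun q => 0 <= q <= 1 /\ 0 <= U q + eps <= 1) p.
Proof.
  intros HU HC eps p Hp Hq.
  destruct (HC p Hp) as [HD _].
  assert (H1 := Dadd unit_interval U1 (fun _ => 0) U (fun _ => eps) p HD (Dconst _ _ _)).
  assert (H2 := Dcomp _ _ _ _ _ _ p H1 (Uinv_der U U1 U2 U3 HU HC _ Hq)).
  eapply D_in_d; [eapply D_in_restrict; [|exact H2]|].
  - intros y Hy. exact Hy.
  - simpl. unfold Rdiv. ring.
Qed.

Definition kf (U1 U2 : R -> R) x := U2 x * / (U1 x * U1 x).

Lemma k_mono sg U U1 U2 U3 : rise_function U -> C3_on_unit U U1 U2 U3 ->
  (forall x, 0 <= x <= 1 -> sg * (U3 x - 2 * U2 x ^ 2 / U1 x) <= 0) ->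
  forall x y, 0 <= x -> x <= y -> y <= 1 -> sg * kf U1 U2 y <= sg * kf U1 U2 x.
Proof.
  intros HU HC Hs x y Hx Hxy Hy.
  set (k' := fun t => U3 t * / (U1 t * U1 t) + U2 t * ((U2 t * U1 t + U1 t * U2 t) * - / ((U1 t * U1 t) * (U1 t * U1 t)))).
  assert (Hd : forall t, 0 <= t <= 1 -> D_in (kf U1 U2) k' unit_interval t).
  { intros t Ht. destruct (HC t Ht) as [_ [H12 [H23 _]]].
    assert (Hp := U1pos U U1 U2 U3 HU HC t Ht).
    assert (Hm := Dmult _ _ _ _ _ _ H12 H12).
    assert (Hi := D_in_Rinv _ _ _ _ Hm ltac:(apply Rgt_not_eq; apply Rmult_lt_0_compat; auto)).
    assert (Hk := Dmult _ _ _ _ _ _ H23 Hi). exact Hk. }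
  assert (Hm := mono_in (fun t => - sg * kf U1 U2 t) (fun t => - sg * k' t) x y Hxy).
  assert (- sg * kf U1 U2 x <= - sg * kf U1 U2 y).
  { apply Hm.
    - intros t Ht. apply Dmult_const. eapply D_in_restrict; [|apply Hd; lra].
      unfold unit_interval; intros; lra.
    - intros t Ht. assert (Ht' : 0 <= t <= 1) by lra.
      assert (Hp := U1pos U U1 U2 U3 HU HC t Ht').
      specialize (Hs t Ht').
      assert (E : - sg * k' t = - (sg * (U3 t - 2 * U2 t ^ 2 / U1 t)) / (U1 t * U1 t)).
      { unfold k'. field. lra. }
      rewrite E. unfold Rdiv. apply Rmult_le_pos; [lra|].
      left; apply Rinv_0_lt_compat, Rmult_lt_0_compat; auto. }
  lra.
Qed.

Lemma core sg U U1 U2 U3 : rise_function U -> C3_on_unit U U1 U2 U3 ->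
  (forall x y, 0 <= x -> x <= y -> y <= 1 -> sg * kf U1 U2 y <= sg * kf U1 U2 x) ->
  forall phi dphi eps, inD U phi dphi eps ->
    exists l, D_in (fun p => DeltaH U p dphi eps) (fun _ => l)
                   (fun p => inD U p dphi eps) phi /\ 0 <= sg * l.
Proof.
  intros HU HC Hk phi dphi eps HD.
  assert (Hnn : forall x, 0 <= x -> 0 <= U x) by (destruct HU as [_ [H _]]; exact H).
  destruct HD as [He [Hp Hd]].
  destruct (Uinv_spec U U1 U2 U3 HU HC (1 - eps) ltac:(lra)) as [Hb Eb].
  set (b := Uinv U (1 - eps)) in *.
  assert (Hsl : forall p, inD U p dphi eps ->
     0 <= p <= 1 /\ 0 <= p + dphi <= 1 /\ 0 <= U p + eps <= 1 /\ 0 <= U (p + dphi) + eps <= 1).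
  { intros p [_ [Hp' Hd']]. fold b in Hd'.
    assert (U (p + dphi) <= U b) by (apply (Ule U HU); lra).
    assert (U p <= U (p + dphi)) by (apply (Ule U HU); lra).
    assert (0 <= U p) by (apply Hnn; lra).
    repeat split; lra. }
  set (Hf := fun q => Uinv U (U q + eps)).
  set (G := fun q => U1 q / U1 (Hf q)).
  destruct (Hsl phi (conj He (conj Hp Hd))) as [S1 [S2 [S3 S4]]].
  exists (G (phi + dphi) - G phi). split.
  - assert (D1 := H_der U U1 U2 U3 HU HC eps phi S1 S3).
    assert (Dl := Dadd no_cond (fun _ => 1) (fun _ => 0) (fun x => x) (fun _ => dphi) phi (Dx _ _) (Dconst _ _ _)).
    assert (D2 := Dcomp _ _ _ _ _ _ phi Dl (H_der U U1 U2 U3 HU HC eps (phi + dphi) S2 S4)).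
    assert (D2' : D_in (fun p => Uinv U (U (p + dphi) + eps)) (fun p => (1 + 0) * (U1 (p + dphi) / U1 (Uinv U (U (p + dphi) + eps)))) (fun p => inD U p dphi eps) phi).
    { eapply D_in_restrict; [|exact D2]. intros y Hy; destruct (Hsl y Hy) as [? [? [? ?]]]. unfold Dgf, no_cond; simpl; tauto. }
    assert (D1' : D_in (fun q => Uinv U (U q + eps)) (fun q => U1 q / U1 (Uinv U (U q + eps))) (fun p => inD U p dphi eps) phi).
    { eapply D_in_restrict; [|exact D1]. intros y Hy; destruct (Hsl y Hy) as [? [? [? ?]]]. simpl; tauto. }
    assert (D3 := Dminus _ _ _ _ _ phi D2' D1').
    eapply D_in_d; [eapply D_in_f; [| |exact D3]|].
    + intros; reflexivity.
    + reflexivity.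
    + simpl. unfold G, Hf. ring.
  - destruct (Req_dec dphi 0) as [Z|Z].
    { rewrite Z, Rplus_0_r. lra. }
    assert (Hin : forall t, phi <= t <= (phi + dphi) -> 0 <= t <= 1 /\ 0 <= U t + eps <= 1).
    { intros t Ht. assert (U t <= U (phi + dphi)) by (apply (Ule U HU); lra).
      assert (0 <= U t) by (apply Hnn; lra). split; lra. }
    set (G' := fun t => U2 t * / U1 (Hf t) + U1 t * ((G t * U2 (Hf t)) * - / (U1 (Hf t) * U1 (Hf t)))).
    assert (HG : forall t, phi <= t <= (phi + dphi) -> D_in G G' (fun z => phi <= z <= (phi + dphi)) t).
    { intros t Ht. destruct (Hin t Ht) as [T1 T2].
      destruct (Uinv_spec U U1 U2 U3 HU HC _ T2) as [Hh _].
      destruct (HC t T1) as [_ [H12 _]].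
      destruct (HC _ Hh) as [_ [H12h _]].
      assert (Hp1 := U1pos U U1 U2 U3 HU HC _ Hh).
      assert (Dc := Dcomp _ _ _ _ _ _ t (H_der U U1 U2 U3 HU HC eps t T1 T2) H12h).
      assert (Di := D_in_Rinv _ _ _ _ Dc ltac:(lra)).
      assert (A1 : D_in U1 U2 (fun z => phi <= z <= (phi + dphi)) t).
      { eapply D_in_restrict; [|exact H12]. intros y Hy; unfold unit_interval; destruct (Hin y Hy); auto. }
      assert (A2 : D_in (fun z => / U1 (Uinv U (U z + eps)))
         (fun z => U1 z / U1 (Uinv U (U z + eps)) * U2 (Uinv U (U z + eps)) * - / (U1 (Uinv U (U z + eps)) * U1 (Uinv U (U z + eps))))
         (fun z => phi <= z <= (phi + dphi)) t).
      { eapply D_in_restrict; [|exact Di]. intros y Hy; destruct (Hin y Hy) as [? ?].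
        unfold Dgf; split; [split; auto|]. unfold unit_interval.
        apply (Uinv_spec U U1 U2 U3 HU HC); auto. }
      assert (Dm := Dmult _ _ _ _ _ t A1 A2).
      exact Dm. }
    assert (Hm := mono_in (fun t => sg * G t) (fun t => sg * G' t) phi (phi + dphi) ltac:(lra)).
    assert (sg * G phi <= sg * G (phi + dphi)).
    { apply Hm.
      - intros t Ht. apply Dmult_const. apply HG; auto.
      - intros t Ht. destruct (Hin t Ht) as [T1 T2].
        destruct (Uinv_spec U U1 U2 U3 HU HC _ T2) as [Hh Eh].
        assert (Hp1 := U1pos U U1 U2 U3 HU HC _ Hh).
        assert (Hp0 := U1pos U U1 U2 U3 HU HC _ T1).
        assert (Hth : t <= Hf t).
        { unfold Hf. apply (Ule_inv U HU); [lra|lra|]. rewrite Eh; lra. }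
        assert (Hkk := Hk t (Hf t) ltac:(lra) Hth ltac:(unfold Hf; lra)).
        assert (E : sg * G' t = (U1 t * U1 t / U1 (Hf t)) * (sg * kf U1 U2 t - sg * kf U1 U2 (Hf t))).
        { unfold G', G, kf, Hf. field. split; lra. }
        rewrite E. apply Rmult_le_pos; [|lra].
        unfold Rdiv, Hf. apply Rmult_le_pos; [apply Rmult_le_pos; lra|left; apply Rinv_0_lt_compat; lra]. }
    lra.
Qed.

Theorem mainTheorem12 (U U1 U2 U3 : R -> R) :
  rise_function U ->
  C3_on_unit U U1 U2 U3 ->
  ((forall phi, 0 <= phi <= 1 ->
      U2 phi <= 0 /\ U3 phi <= 2 * U2 phi ^ 2 / U1 phi) -> icpd U) /\
  ((forall phi, 0 <= phi <= 1 ->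
      0 <= U2 phi /\ 2 * U2 phi ^ 2 / U1 phi <= U3 phi) -> dcpd U) /\
  ((forall psi phi, 0 <= psi -> psi <= phi -> phi <= 1 ->
      U3 phi <= 3 * U2 phi ^ 2 / U1 phi
                - U2 psi * U2 phi * U1 phi / U1 psi ^ 2) -> icpd U) /\
  ((forall psi phi, 0 <= psi -> psi <= phi -> phi <= 1 ->
      3 * U2 phi ^ 2 / U1 phi
        - U2 psi * U2 phi * U1 phi / U1 psi ^ 2 <= U3 phi) -> dcpd U).
Proof.
  intros HU HC.
  assert (Hp := U1pos U U1 U2 U3 HU HC).
  assert (Eq : forall x, 0 <= x <= 1 ->
     3 * U2 x ^ 2 / U1 x - U2 x * U2 x * U1 x / U1 x ^ 2 = 2 * U2 x ^ 2 / U1 x).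
  { intros x Hx. specialize (Hp x Hx). field. lra. }
  assert (Ic : (forall x, 0 <= x <= 1 -> 1 * (U3 x - 2 * U2 x ^ 2 / U1 x) <= 0) -> icpd U).
  { intros H phi dphi eps HD.
    destruct (core 1 U U1 U2 U3 HU HC (k_mono 1 U U1 U2 U3 HU HC H) phi dphi eps HD) as [l [Hl Hs]].
    exists l; split; auto; lra. }
  assert (Dc : (forall x, 0 <= x <= 1 -> -1 * (U3 x - 2 * U2 x ^ 2 / U1 x) <= 0) -> dcpd U).
  { intros H phi dphi eps HD.
    destruct (core (-1) U U1 U2 U3 HU HC (k_mono (-1) U U1 U2 U3 HU HC H) phi dphi eps HD) as [l [Hl Hs]].
    exists l; split; auto; lra. }
  split; [|split; [|split]].
  - intro H; apply Ic; intros x Hx; destruct (H x Hx); lra.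
  - intro H; apply Dc; intros x Hx; destruct (H x Hx); lra.
  - intro H; apply Ic; intros x Hx; specialize (H x x ltac:(lra) ltac:(lra) ltac:(lra)).
    rewrite (Eq x Hx) in H; lra.
  - intro H; apply Dc; intros x Hx; specialize (H x x ltac:(lra) ltac:(lra) ltac:(lra)).
    rewrite (Eq x Hx) in H; lra.
Qed.
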